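(* In the setting of the homogeneous all-to-all network with coupling $\varepsilon$, $(N-1)\varepsilon<1$, a neuronal differentiable partial reset $R$ and a strictly convex ($U''>0$) dcpd rise function $U$, let $2\le a_1\le N$. If $R'(\zeta)\ge1$ for all $\zeta\in[(a_1-2)\varepsilon,(a_1-1)\varepsilon]$, then an avalanche of size $a_1$ is not invariant under return (for every admissible trigger-invariant firing sequence $\mathcal{F}$ with first avalanche size $a_1$ and every $0<\Delta\phi\le1-U^{-1}(1-\varepsilon)$, $1-M_{\mathcal{F}}(1-\Delta\phi)>\Delta\phi$).
   Context: Rise function: smooth $U:[0,\infty)\to[0,\infty)$, $U'>0$, $U(0)=0$, $U(1)=1$. Partial reset: monotonically increasing $R$ with $R(0)=0$; neuronal if $0\le R(\zeta)\le\zeta$ for $\zeta\ge0$. $H_\varepsilon(\phi)=U^{-1}(U(\phi)+\varepsilon)$, $J_\varepsilon(\phi)=U^{-1}(R(U(\phi)+\varepsilon-1))$, $S_\sigma(\phi)=\phi+\sigma$, $\bigodot_{r=p}^q(S_{\sigma_r}\circ H_{\varepsilon_r}):=S_{\sigma_q}\circ H_{\varepsilon_q}\circ\cdots\circ S_{\sigma_p}\circ H_{\varepsilon_p}$. Network: $N$ units, pulse strength $\varepsilon>0$ between distinct units; phases grow at unit rate; at phase $1$ a unit fires, raising potentials $U(\phi_i)$ of the others by $\varepsilon$; units reaching potential $\ge1$ fire in the same avalanche; non-firing units get phase $H_{k\varepsilon}(\phi_i)$, firing units $J_{k'\varepsilon}(\phi_i)$ ($k$, $k'$ = number of firing units, resp.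 other than itself). Firing sequence $\mathcal{F}=((a_1,\sigma_1),\dots,(a_m,\sigma_m))$: avalanche sizes and inter-avalanche times over one period of the trigger unit of an avalanche of size $a_1$; admissible = realized by some state; trigger invariant = trigger again at phase $1$ at the end. $M_{\mathcal{F}}(\phi)=\big[\bigodot_{r=2}^m(S_{\sigma_r}\circ H_{a_r\varepsilon})\big]\circ S_{\sigma_1}\circ J_{(a_1-1)\varepsilon}(\phi)$. Invariance under return: $M_{\mathcal{F}}(U^{-1}(1-a\varepsilon))\ge U^{-1}(1-a\varepsilon)$ for all $a\in\{1,\dots,a_1-1\}$ and all admissible trigger-invariant $\mathcal{F}$ with first avalanche size $a_1$. dcpd: $\partial_\phi[H_\varepsilon(\phi+\Delta\phi)-H_\varepsilon(\phi)]\le0$ for $0\le\varepsilon\le1$, $0\le\phi\le1$, $0\le\Delta\phi\le U^{-1}(1-\varepsilon)-\phi$. *)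

(* Defs.v *)
From Stdlib Require Import Reals Lra Lia List ClassicalEpsilon.
Import ListNotations.
Open Scope R_scope.

(* U^{-1} on [0,oo): the nonnegative preimage (chosen by epsilon). *)
Definition Uinv (U : R -> R) (y : R) : R :=
  epsilon (inhabits 0) (fun x => 0 <= x /\ U x = y).

Definition Hf (U : R -> R) (e phi : R) : R := Uinv U (U phi + e).

Definition Jf (U Rr : R -> R) (e phi : R) : R := Uinv U (Rr (U phi + e - 1)).

Definition Sf (s phi : R) : R := phi + s.

Definition dcpd (U : R -> R) : Prop :=
  forall e phi dphi d,
    0 <= e <= 1 -> 0 <= phi <= 1 -> 0 <= dphi <= Uinv U (1 - e) - phi ->
    derivable_pt_lim (fun p => Hf U e (p + dphi) - Hf U e p) phi d ->
    d <= 0.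

Definition smooth_with (U : R -> R) (DU : nat -> R -> R) : Prop :=
  (forall x, DU 0%nat x = U x) /\
  (forall n x, derivable_pt_lim (DU n) x (DU (S n) x)).

Definition count_true (N : nat) (F : nat -> bool) : nat :=
  length (filter F (seq 0 N)).

(* Starting from the empty set, the first step yields the units at phase 1. *)
Definition aval_step (U : R -> R) (eps : R) (N : nat) (phi : nat -> R)
    (F : nat -> bool) : nat -> bool :=
  fun i => orb (F i) (if Rle_dec 1 (U (phi i) + INR (count_true N F) * eps)
                   then true else false).

(* the set of units firing in the avalanche triggered in state phi
   (the iteration stabilises after at most N+1 steps) *)
Definition aval_set (U : R -> R) (eps : R) (N : nat) (phi : nat -> R) : nat -> bool :=
  Nat.iter (S N) (aval_step U eps N phi) (fun _ => false).

Definition aval_size (U : R -> R) (eps : R) (N : nat) (phi : nat -> R) : nat :=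
  count_true N (aval_set U eps N phi).

Definition post_aval (U Rr : R -> R) (eps : R) (N : nat) (phi : nat -> R) : nat -> R :=
  fun i => if aval_set U eps N phi i
           then Jf U Rr ((INR (aval_size U eps N phi) - 1) * eps) (phi i)
           else Hf U (INR (aval_size U eps N phi) * eps) (phi i).

(* A firing sequence is a list of (avalanche size, inter-avalanche time). *)
(* admissible and trigger invariant: realised by some state psi 0 (phases in
   [0,1], trigger j at phase 1); psi r = state at the start of avalanche r;
   sigma_r = time until the next unit reaches phase 1; the trigger does not fire
   in avalanches 2..m and is at phase 1 again at the end of the period. *)
Definition adm_trigger_inv (U Rr : R -> R) (eps : R) (N : nat)
    (F : list (nat * R)) : Prop :=
  F <> [] /\
  exists (psi : nat -> nat -> R) (j : nat),
    (j < N)%nat /\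
    (forall i, (i < N)%nat -> 0 <= psi 0%nat i <= 1) /\
    psi 0%nat j = 1 /\
    (forall r, (r < length F)%nat ->
       let a := fst (nth r F (0%nat, 0)) in
       let s := snd (nth r F (0%nat, 0)) in
       a = aval_size U eps N (psi r) /\
       (forall i, (i < N)%nat -> psi (S r) i = post_aval U Rr eps N (psi r) i + s) /\
       (forall i, (i < N)%nat -> post_aval U Rr eps N (psi r) i + s <= 1) /\
       (exists i, (i < N)%nat /\ post_aval U Rr eps N (psi r) i + s = 1)) /\
    (forall r, (1 <= r < length F)%nat -> aval_set U eps N (psi r) j = false) /\
    psi (length F) j = 1.

Fixpoint Mrest (U : R -> R) (eps : R) (l : list (nat * R)) (x : R) : R :=
  match l with
  | [] => x
  | (a, s) :: l' => Mrest U eps l' (Sf s (Hf U (INR a * eps) x))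
  end.

Definition MF (U Rr : R -> R) (eps : R) (F : list (nat * R)) (phi : R) : R :=
  match F with
  | [] => phi
  | (a1, s1) :: rest => Mrest U eps rest (Sf s1 (Jf U Rr ((INR a1 - 1) * eps) phi))
  end.

(* Main.v *)
Require Import Defs.
From Stdlib Require Import Reals Lra Lia List ClassicalEpsilon.
Import ListNotations.
Open Scope R_scope.

Definition Uok (U : R -> R) (DU : nat -> R -> R) : Prop :=
  smooth_with U DU /\ (forall x, 0 <= x -> 0 < DU 1%nat x) /\ U 0 = 0 /\ U 1 = 1 /\
  (forall x, 0 <= x -> 0 < DU 2%nat x).

Lemma dU U DU : Uok U DU -> forall c, derivable_pt_lim U c (DU 1%nat c).
Proof.
  intros [[H0 HD] _] c e he. destruct (HD 0%nat c e he) as [d Hd].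
  exists d. intros h hh hd. rewrite <- !H0. apply Hd; auto.
Qed.

Lemma DU1_incr U DU : Uok U DU -> forall a b, 0 <= a -> a < b -> DU 1%nat a < DU 1%nat b.
Proof.
  intros HU a b ha hab. destruct HU as [[H0 HD] [_ [_ [_ H2]]]].
  destruct (MVT_cor2 (DU 1%nat) (DU 2%nat) a b hab) as [c [Hc Hc2]].
  { intros; apply HD. }
  assert (0 < DU 2%nat c) by (apply H2; lra).
  assert (0 < DU 2%nat c * (b - a)) by (apply Rmult_lt_0_compat; lra). lra.
Qed.

Lemma U_incr U DU : Uok U DU -> forall a b, 0 <= a -> a < b -> U a < U b.
Proof.
  intros HU a b ha hab.
  destruct (MVT_cor2 U (DU 1%nat) a b hab) as [c [Hc Hc2]].
  { intros; apply (dU U DU HU). }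
  destruct HU as [_ [H1 _]].
  assert (0 < DU 1%nat c) by (apply H1; lra).
  assert (0 < DU 1%nat c * (b - a)) by (apply Rmult_lt_0_compat; lra). lra.
Qed.

Lemma U_le U DU : Uok U DU -> forall a b, 0 <= a -> a <= b -> U a <= U b.
Proof.
  intros HU a b ha hab. destruct (Req_dec a b). subst; lra.
  left; apply (U_incr U DU HU); lra.
Qed.

Lemma U_lt_rev U DU : Uok U DU -> forall a b, 0 <= b -> U a < U b -> a < b.
Proof.
  intros HU a b ha h. destruct (Rlt_le_dec a b); auto.
  assert (U b <= U a). { apply (U_le U DU HU). lra. lra. } lra.
Qed.

Lemma U_nonneg U DU : Uok U DU -> forall a, 0 <= a -> 0 <= U a.
Proof.
  intros HU a ha. pose proof (U_le U DU HU 0 a (Rle_refl 0) ha).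
  destruct HU as [_ [_ [H0 _]]]. lra.
Qed.

Lemma U_lin U DU : Uok U DU -> forall x, 0 <= x -> DU 1%nat 0 * x <= U x.
Proof.
  intros HU x hx. destruct (Req_dec x 0).
  { subst. destruct HU as [_ [_ [H0 _]]]. lra. }
  destruct (MVT_cor2 U (DU 1%nat) 0 x) as [c [Hc Hc2]]. lra.
  { intros; apply (dU U DU HU). }
  pose proof (DU1_incr U DU HU 0 c (Rle_refl 0) (proj1 Hc2)).
  destruct HU as [_ [_ [HU0 _]]]. rewrite HU0 in Hc.
  assert (DU 1%nat 0 * x <= DU 1%nat c * x) by (apply Rmult_le_compat_r; lra).
  lra.
Qed.

Lemma U_surj U DU : Uok U DU -> forall v, 0 <= v -> exists x, 0 <= x /\ U x = v.
Proof.
  intros HU v hv. destruct (Req_dec v 0).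
  { exists 0. destruct HU as [_ [_ [H0 _]]]. split; lra. }
  assert (hd : 0 < DU 1%nat 0) by (destruct HU as [_ [H1 _]]; apply H1; lra).
  set (b := v / DU 1%nat 0 + 1).
  assert (hb : 0 < b).
  { unfold b. assert (0 <= v / DU 1%nat 0) by (unfold Rdiv; apply Rmult_le_pos; [lra| left; apply Rinv_0_lt_compat; lra]). lra. }
  assert (hUb : v < U b).
  { pose proof (U_lin U DU HU b (Rlt_le _ _ hb)).
    assert (DU 1%nat 0 * b = v + DU 1%nat 0) by (unfold b; field; lra). lra. }
  assert (hc : continuity (fun x => U x - v)).
  { intro x. apply continuity_pt_minus. apply derivable_continuous_pt.
    exists (DU 1%nat x). apply (dU U DU HU). apply continuity_pt_const. intros a c; auto. }
  destruct (IVT (fun x => U x - v) 0 b hc hb) as [z [Hz Hz2]].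
  { destruct HU as [_ [_ [H0 _]]]. simpl. lra. }
  { simpl. lra. }
  exists z. split. lra. simpl in Hz2. lra.
Qed.

Lemma Uinv_spec U DU : Uok U DU -> forall v, 0 <= v -> 0 <= Uinv U v /\ U (Uinv U v) = v.
Proof.
  intros HU v hv. unfold Uinv. apply epsilon_spec. apply (U_surj U DU HU v hv).
Qed.

Lemma Uinv_lt1 U DU : Uok U DU -> forall v, 0 <= v -> v < 1 -> Uinv U v < 1.
Proof.
  intros HU v hv h1. destruct (Uinv_spec U DU HU v hv) as [A B].
  apply (U_lt_rev U DU HU). lra. destruct HU as [_ [_ [_ [H1 _]]]]. lra.
Qed.

Lemma deriv_shift f x d l : derivable_pt_lim f (x + d) l -> derivable_pt_lim (fun t => f (t + d)) x l.
Proof.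
  intros H e he. destruct (H e he) as [del Hd]. exists del. intros h hh hd.
  replace (x + h + d) with (x + d + h) by ring. apply Hd; auto.
Qed.

Lemma U_convex U DU : Uok U DU -> forall x y s, 0 <= y -> y < x -> 0 < s ->
  U x - U y < U (x + s) - U (y + s).
Proof.
  intros HU x y s hy hyx hs. set (d := x - y).
  destruct (MVT_cor2 (fun t => U (t + d) - U t) (fun t => DU 1%nat (t + d) - DU 1%nat t) y (y + s))
    as [c [Hc Hc2]]. lra.
  { intros c _. apply derivable_pt_lim_minus. apply deriv_shift. apply (dU U DU HU). apply (dU U DU HU). }
  pose proof (DU1_incr U DU HU c (c + d)). 
  assert (0 < DU 1%nat (c + d) - DU 1%nat c) by (unfold d in *; apply Rlt_Rminus, H; lra).
  assert (0 < (DU 1%nat (c + d) - DU 1%nat c) * (y + s - y)) by (apply Rmult_lt_0_compat; lra).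
  replace (y + s + d) with (x + s) in Hc by (unfold d; ring).
  replace (y + d) with x in Hc by (unfold d; ring). lra.
Qed.

Lemma R_step (Rr dR : R -> R) lo hi :
  (forall z, derivable_pt_lim Rr z (dR z)) ->
  (forall z, lo <= z <= hi -> 1 <= dR z) ->
  forall zy zx, lo <= zy -> zy < zx -> zx <= hi -> zx - zy <= Rr zx - Rr zy.
Proof.
  intros Hd H1 zy zx h1 h2 h3.
  destruct (MVT_cor2 Rr dR zy zx h2) as [c [Hc Hc2]]. { intros; apply Hd. }
  assert (1 <= dR c) by (apply H1; lra).
  assert (1 * (zx - zy) <= dR c * (zx - zy)) by (apply Rmult_le_compat_r; lra). lra.
Qed.

Lemma Mrest_gap U DU eps : Uok U DU -> 0 <= eps -> forall l,
  (forall p, In p l -> 0 <= snd p) -> forall x y, 0 <= y -> y < x ->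
  0 <= Mrest U eps l y /\ Mrest U eps l y < Mrest U eps l x /\
  U x - U y <= U (Mrest U eps l x) - U (Mrest U eps l y).
Proof.
  intros HU he l. induction l as [|[a s] l IH]; intros Hl x y hy hyx; simpl.
  - lra.
  - assert (hs : 0 <= s) by (apply (Hl (a, s)); left; auto).
    assert (hea : 0 <= INR a * eps) by (apply Rmult_le_pos; [apply pos_INR | lra]).
    pose proof (U_nonneg U DU HU y hy) as Uy.
    pose proof (U_nonneg U DU HU x (Rlt_le _ _ (Rle_lt_trans _ _ _ hy hyx))) as Ux.
    destruct (Uinv_spec U DU HU (U y + INR a * eps)) as [A1 B1]. lra.
    destruct (Uinv_spec U DU HU (U x + INR a * eps)) as [A2 B2]. lra.
    unfold Sf, Hf.
    set (hy' := Uinv U (U y + INR a * eps)) in *.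
    set (hx' := Uinv U (U x + INR a * eps)) in *.
    pose proof (U_incr U DU HU y x hy hyx).
    assert (hlt : hy' < hx') by (apply (U_lt_rev U DU HU); lra).
    assert (U x - U y <= U (hx' + s) - U (hy' + s)).
    { destruct (Req_dec s 0). subst s. rewrite !Rplus_0_r. lra.
      pose proof (U_convex U DU HU hx' hy' s A1 hlt). lra. }
    destruct (IH (fun p hp => Hl p (or_intror hp)) (hx' + s) (hy' + s)) as [C [D E]]; lra.
Qed.

Lemma main_ineq U DU Rr dR eps (a1 : nat) s1 rest phi :
  Uok U DU -> 0 < eps -> eps < 1 ->
  (forall z, derivable_pt_lim Rr z (dR z)) ->
  (forall z, 0 <= z -> 0 <= Rr z <= z) ->
  (2 <= a1)%nat ->
  (forall z, (INR a1 - 2) * eps <= z <= (INR a1 - 1) * eps -> 1 <= dR z) ->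
  (forall p, In p ((a1, s1) :: rest) -> 0 < snd p) ->
  MF U Rr eps ((a1, s1) :: rest) 1 = 1 ->
  Uinv U (1 - eps) <= phi -> phi < 1 ->
  MF U Rr eps ((a1, s1) :: rest) phi < phi.
Proof.
  intros HU he he1 Hd Hpos ha1 HdR Hs HM1 hphi1 hphi2.
  destruct (Uinv_spec U DU HU (1 - eps)) as [A0 B0]. lra.
  assert (hphi0 : 0 <= phi) by lra.
  pose proof (U_le U DU HU _ _ A0 hphi1) as Uphi1.
  assert (HU1 : U 1 = 1) by (destruct HU as [_ [_ [_ [H1 _]]]]; auto).
  pose proof (U_incr U DU HU _ _ hphi0 hphi2) as Uphi2.
  assert (ha : 2 <= INR a1) by (replace 2 with (INR 2) by (simpl; ring); apply le_INR; auto).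
  unfold MF in *. unfold Jf in *.
  set (zx := U 1 + (INR a1 - 1) * eps - 1) in *.
  set (zy := U phi + (INR a1 - 1) * eps - 1) in *.
  assert (hzx : zx = (INR a1 - 1) * eps) by (unfold zx; rewrite HU1; ring).
  assert (hzy : (INR a1 - 2) * eps <= zy) by (unfold zy; nra).
  assert (hzy0 : 0 <= zy) by nra.
  assert (hzyx : zy < zx) by (unfold zx, zy; lra).
  pose proof (R_step Rr dR _ _ Hd HdR zy zx hzy hzyx (Req_le _ _ hzx)) as HR.
  destruct (Hpos zy hzy0) as [Ry _].
  destruct (Uinv_spec U DU HU (Rr zy)) as [A1 B1]. lra.
  destruct (Uinv_spec U DU HU (Rr zx)) as [A2 B2]. lra.
  set (y0 := Uinv U (Rr zy)) in *. set (x0 := Uinv U (Rr zx)) in *.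
  assert (hlt : y0 < x0) by (apply (U_lt_rev U DU HU); lra).
  assert (hs1 : 0 < s1) by (apply (Hs (a1, s1)); left; auto).
  pose proof (U_convex U DU HU x0 y0 s1 A1 hlt hs1).
  destruct (Mrest_gap U DU eps HU (Rlt_le _ _ he) rest
     (fun p hp => Rlt_le _ _ (Hs p (or_intror hp))) (Sf s1 x0) (Sf s1 y0)) as [C [D E]].
  unfold Sf; lra. unfold Sf; lra.
  rewrite HM1 in E. unfold Sf in E.
  apply (U_lt_rev U DU HU). auto. unfold Sf in *. assert (zx - zy = U 1 - U phi) by (unfold zx, zy; ring). lra.
Qed.

Lemma count_true_S n F : count_true (S n) F = (count_true n F + (if F n then 1 else 0))%nat.
Proof.
  unfold count_true. rewrite seq_S, filter_app, length_app. simpl.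
  destruct (F n); simpl; lia.
Qed.

Lemma count_le_N N F : (count_true N F <= N)%nat.
Proof.
  unfold count_true. pose proof (filter_length_le F (seq 0 N)). rewrite length_seq in H. auto.
Qed.

Lemma count_ext N F G : (forall i, (i < N)%nat -> F i = G i) -> count_true N F = count_true N G.
Proof.
  induction N; intros H. reflexivity.
  rewrite !count_true_S. rewrite IHN by (intros; apply H; lia). rewrite (H N) by lia. auto.
Qed.

Lemma count_mono N F G : (forall i, (i < N)%nat -> F i = true -> G i = true) ->
  (count_true N F <= count_true N G)%nat.
Proof.
  induction N; intros H. unfold count_true; simpl; lia.
  rewrite !count_true_S. assert (IH := IHN (fun i hi => H i ltac:(lia))).
  destruct (F N) eqn:E. rewrite (H N) by (auto; lia). lia. destruct (G N); lia.
Qed.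

Lemma count_strict N F G : (forall i, (i < N)%nat -> F i = true -> G i = true) ->
  forall i, (i < N)%nat -> F i = false -> G i = true ->
  (count_true N F < count_true N G)%nat.
Proof.
  induction N; intros H i hi Fi Gi. lia.
  rewrite !count_true_S. destruct (Nat.eq_dec i N).
  - subst. rewrite Fi, Gi. pose proof (count_mono N F G (fun k hk => H k ltac:(lia))). lia.
  - assert (IH := IHN (fun k hk => H k ltac:(lia)) i ltac:(lia) Fi Gi).
    destruct (F N) eqn:E. rewrite (H N) by (auto; lia). lia. destruct (G N); lia.
Qed.

Section Aval.
Variables (U : R -> R) (eps : R) (N : nat) (phi : nat -> R).
Hypothesis heps : 0 <= eps.

Let step := aval_step U eps N phi.
Let it t := Nat.iter t step (fun _ => false).
Let c t := count_true N (it t).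

Lemma step_incl F i : F i = true -> step F i = true.
Proof. intros H. unfold step, aval_step. rewrite H. auto. Qed.

Lemma step_ext F G : (forall i, (i < N)%nat -> F i = G i) ->
  forall i, (i < N)%nat -> step F i = step G i.
Proof.
  intros H i hi. unfold step, aval_step. rewrite (count_ext N F G H), (H i hi). auto.
Qed.

Lemma c_mono t : (c t <= c (S t))%nat.
Proof. unfold c. apply count_mono. intros i _ h. simpl. apply step_incl; auto. Qed.

Lemma stable t : c t = c (S t) -> forall i, (i < N)%nat -> it t i = it (S t) i.
Proof.
  intros H i hi. destruct (it t i) eqn:E.
  - simpl. symmetry. apply step_incl; auto.
  - destruct (it (S t) i) eqn:E2; auto.
    exfalso. assert (c t < c (S t))%nat.
    { unfold c. apply (count_strict N _ _ (fun k _ h => step_incl _ k h) i hi E E2). }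
    lia.
Qed.

Lemma stable2 t : c t = c (S t) -> c (S t) = c (S (S t)).
Proof.
  intros H. unfold c. apply count_ext. intros i hi.
  change (step (it t) i = step (it (S t)) i).
  apply step_ext; auto. intros k hk. apply (stable t H k hk).
Qed.

Lemma stable_prop t : c t = c (S t) -> forall k, c (k + t)%nat = c (S (k + t)).
Proof.
  intros H k. induction k. auto. simpl. apply stable2. auto.
Qed.

Lemma c_final : c N = c (S N).
Proof.
  destruct (Nat.eq_dec (c N) (c (S N))) as [e|ne]; auto. exfalso.
  assert (Hlt : forall t, (t <= N)%nat -> (c t < c (S t))%nat).
  { intros t ht. pose proof (c_mono t). destruct (Nat.eq_dec (c t) (c (S t))) as [e|]; [|lia].
    exfalso. apply ne. pose proof (stable_prop t e (N - t)). replace (N - t + t)%nat with N in H0 by lia. auto. }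
  assert (forall t, (t <= S N)%nat -> (t <= c t)%nat).
  { induction t; intros. lia. pose proof (Hlt t ltac:(lia)). pose proof (IHt ltac:(lia)). lia. }
  pose proof (H (S N) (le_n _)). pose proof (count_le_N N (it (S N))). unfold c in H0. lia.
Qed.

Lemma aval_nonfire i : (i < N)%nat -> aval_set U eps N phi i = false ->
  U (phi i) + INR (aval_size U eps N phi) * eps < 1.
Proof.
  intros hi H. unfold aval_size. change (aval_set U eps N phi) with (it (S N)) in *.
  change (count_true N (it (S N))) with (c (S N)). rewrite <- c_final.
  simpl in H. unfold step, aval_step in H. apply Bool.orb_false_iff in H. destruct H as [_ H].
  destruct (Rle_dec _ _); [discriminate|]. unfold c, it in *. lra.
Qed.

Lemma aval_fire_t t : forall i, (i < N)%nat -> it t i = true ->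
  1 <= U (phi i) + (INR (c t) - 1) * eps.
Proof.
  induction t; intros i hi H. simpl in H; discriminate.
  pose proof (c_mono t) as Hm. apply le_INR in Hm.
  destruct (it t i) eqn:E.
  - pose proof (IHt i hi E). nra.
  - assert (Hs : (c t < c (S t))%nat).
    { unfold c. apply (count_strict N _ _ (fun k _ h => step_incl _ k h) i hi E H). }
    assert (Hs2 : INR (c t) + 1 <= INR (c (S t))) by (rewrite <- S_INR; apply le_INR; lia).
    simpl in H. unfold step, aval_step in H. rewrite E in H. simpl in H.
    destruct (Rle_dec _ _); [|discriminate]. unfold c, it in *. nra.
Qed.

Lemma aval_fire i : (i < N)%nat -> aval_set U eps N phi i = true ->
  1 <= U (phi i) + (INR (aval_size U eps N phi) - 1) * eps.
Proof. intros. apply (aval_fire_t (S N) i); auto. Qed.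

End Aval.

Lemma post_bounds U DU Rr eps N phi : Uok U DU -> 0 < eps -> (INR N - 1) * eps < 1 ->
  (forall z, 0 <= z -> 0 <= Rr z <= z) ->
  (forall i, (i < N)%nat -> 0 <= phi i <= 1) ->
  forall i, (i < N)%nat -> 0 <= post_aval U Rr eps N phi i < 1.
Proof.
  intros HU he hN Hpos Hphi i hi. unfold post_aval.
  assert (hk : INR (aval_size U eps N phi) <= INR N) by (apply le_INR; apply count_le_N).
  pose proof (pos_INR (aval_size U eps N phi)).
  destruct (Hphi i hi) as [p0 p1].
  pose proof (U_le U DU HU _ _ p0 p1) as Up1.
  pose proof (U_nonneg U DU HU _ p0) as Up0.
  assert (HU1 : U 1 = 1) by (destruct HU as [_ [_ [_ [H1 _]]]]; auto).
  destruct (aval_set U eps N phi i) eqn:E.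
  - pose proof (aval_fire U eps N phi (Rlt_le _ _ he) i hi E) as Hfi.
    unfold Jf. set (z := U (phi i) + (INR (aval_size U eps N phi) - 1) * eps - 1).
    assert (z0 : 0 <= z) by (unfold z; lra).
    assert (z1 : z < 1) by (unfold z; nra).
    destruct (Hpos z z0).
    split. apply (Uinv_spec U DU HU); lra. apply (Uinv_lt1 U DU HU); lra.
  - pose proof (aval_nonfire U eps N phi i hi E) as Hnf. unfold Hf.
    assert (0 <= INR (aval_size U eps N phi) * eps) by (apply Rmult_le_pos; lra).
    split. apply (Uinv_spec U DU HU); lra. apply (Uinv_lt1 U DU HU); lra.
Qed.

Lemma Mrest_psi U Rr eps N (F : list (nat * R)) (psi : nat -> nat -> R) j :
  (j < N)%nat ->
  (forall r, (r < length F)%nat ->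
       let a := fst (nth r F (0%nat, 0)) in
       let s := snd (nth r F (0%nat, 0)) in
       a = aval_size U eps N (psi r) /\
       (forall i, (i < N)%nat -> psi (S r) i = post_aval U Rr eps N (psi r) i + s) /\
       (forall i, (i < N)%nat -> post_aval U Rr eps N (psi r) i + s <= 1) /\
       (exists i, (i < N)%nat /\ post_aval U Rr eps N (psi r) i + s = 1)) ->
  (forall r, (1 <= r < length F)%nat -> aval_set U eps N (psi r) j = false) ->
  forall l k, (1 <= k)%nat -> skipn k F = l ->
  Mrest U eps l (psi k j) = psi (k + length l)%nat j.
Proof.
  intros hj Hr Hnf l. induction l as [|[a s] l IH]; intros k hk Hsk.
  - simpl. rewrite Nat.add_0_r. auto.
  - assert (hkl : (k < length F)%nat).
    { pose proof (length_skipn k F). rewrite Hsk in H. simpl in H. lia. }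
    assert (Hn : nth k F (0%nat, 0) = (a, s)).
    { pose proof (nth_skipn k F 0 (0%nat, 0)). rewrite Hsk, Nat.add_0_r in H. simpl in H. auto. }
    destruct (Hr k hkl) as [Ha [Hs _]]. rewrite Hn in Ha, Hs. simpl in Ha, Hs.
    pose proof (Hnf k ltac:(lia)) as Hk.
    simpl. unfold Sf.
    assert (Hsk' : skipn (S k) F = l).
    { replace (S k) with (1 + k)%nat by lia. rewrite <- skipn_skipn, Hsk. reflexivity. }
    pose proof (IH (S k) ltac:(lia) Hsk') as IH'.
    rewrite (Hs j hj) in IH'. unfold post_aval in IH'. rewrite Hk in IH'. rewrite <- Ha in IH'.
    rewrite IH'. f_equal. lia.
Qed.

Lemma adm_facts U DU Rr eps N F : Uok U DU -> 0 < eps -> (INR N - 1) * eps < 1 ->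
  (forall z, 0 <= z -> 0 <= Rr z <= z) ->
  adm_trigger_inv U Rr eps N F ->
  (forall p, In p F -> 0 < snd p) /\ MF U Rr eps F 1 = 1.
Proof.
  intros HU he hN Hpos [Fne [psi [j [hj [H0 [Hj0 [Hr [Hnf Hjm]]]]]]]].
  assert (Hsp : forall r, (r < length F)%nat -> (forall i, (i < N)%nat -> 0 <= psi r i <= 1) ->
     0 < snd (nth r F (0%nat, 0))).
  { intros r hl Hbr. destruct (Hr r hl) as [_ [_ [_ [i0 [hi0 Heq]]]]].
    pose proof (post_bounds U DU Rr eps N (psi r) HU he hN Hpos Hbr i0 hi0). simpl in Heq. lra. }
  assert (Hb : forall r, (r <= length F)%nat -> forall i, (i < N)%nat -> 0 <= psi r i <= 1).
  { induction r; intros hr i hi.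
    - apply H0; auto.
    - assert (Hbr : forall i, (i < N)%nat -> 0 <= psi r i <= 1) by (intros; apply IHr; auto; lia).
      pose proof (Hsp r ltac:(lia) Hbr) as Hs0.
      destruct (Hr r ltac:(lia)) as [_ [Hs [Hle _]]]. simpl in Hs, Hle.
      pose proof (post_bounds U DU Rr eps N (psi r) HU he hN Hpos Hbr i hi).
      rewrite (Hs i hi). pose proof (Hle i hi). lra. }
  split.
  { intros p hp. destruct (In_nth F p (0%nat, 0) hp) as [r [hr <-]].
    apply Hsp; auto. intros; apply Hb; auto; lia. }
  destruct F as [|[a s] rest]. { exfalso; apply Fne; auto. }
  destruct (Hr 0%nat ltac:(simpl; lia)) as [Ha [Hs _]]. simpl in Ha, Hs.
  assert (Hfire : aval_set U eps N (psi 0%nat) j = true).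
  { unfold aval_set. change (Nat.iter (S N) (aval_step U eps N (psi 0%nat)) (fun _ => false))
      with (aval_step U eps N (psi 0%nat) (Nat.iter N (aval_step U eps N (psi 0%nat)) (fun _ => false))).
    unfold aval_step at 1. rewrite Hj0.
    destruct (Rle_dec _ _) as [|n]. apply Bool.orb_true_r.
    exfalso. apply n. assert (HU1 : U 1 = 1) by (destruct HU as [_ [_ [_ [H1 _]]]]; auto).
    rewrite HU1. pose proof (pos_INR (count_true N (Nat.iter N (aval_step U eps N (psi 0%nat)) (fun _ => false)))).
    nra. }
  pose proof (Mrest_psi U Rr eps N ((a, s) :: rest) psi j hj Hr Hnf rest 1%nat (le_n _) eq_refl) as HM.
  simpl length in HM, Hjm. simpl plus in HM. rewrite Hjm in HM.
  rewrite (Hs j hj) in HM. unfold post_aval in HM. rewrite Hfire, <- Ha, Hj0 in HM.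
  unfold MF, Sf. exact HM.
Qed.

Theorem mainTheorem8 :
  forall (N : nat) (eps : R) (U : R -> R) (DU : nat -> R -> R)
         (Rr : R -> R) (dR : R -> R) (a1 : nat),
    (* coupling *)
    0 < eps -> (INR N - 1) * eps < 1 ->
    (* rise function: smooth, U' > 0, U(0)=0, U(1)=1, strictly convex, dcpd *)
    smooth_with U DU ->
    (forall x, 0 <= x -> 0 < DU 1%nat x) ->
    U 0 = 0 -> U 1 = 1 ->
    (forall x, 0 <= x -> 0 < DU 2%nat x) ->
    dcpd U ->
    (* neuronal differentiable partial reset *)
    (forall z, derivable_pt_lim Rr z (dR z)) ->
    Rr 0 = 0 ->
    (forall z1 z2, 0 <= z1 -> z1 <= z2 -> Rr z1 <= Rr z2) ->
    (forall z, 0 <= z -> 0 <= Rr z <= z) ->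
    (2 <= a1 <= N)%nat ->
    (forall z, (INR a1 - 2) * eps <= z <= (INR a1 - 1) * eps -> 1 <= dR z) ->
    forall (F : list (nat * R)),
      adm_trigger_inv U Rr eps N F ->
      fst (nth 0 F (0%nat, 0)) = a1 ->
      forall dphi, 0 < dphi <= 1 - Uinv U (1 - eps) ->
        1 - MF U Rr eps F (1 - dphi) > dphi.
Proof.
  intros N eps U DU Rr dR a1 he hN Hs HD1 HU0 HU1 HD2 _ Hd _ _ Hpos ha HdR F Hadm Hfst dphi hdphi.
  assert (HU : Uok U DU) by (repeat split; auto; apply Hs).
  assert (hN2 : 2 <= INR N) by (replace 2 with (INR 2) by (simpl; ring); apply le_INR; lia).
  assert (he1 : eps < 1) by nra.
  destruct (adm_facts U DU Rr eps N F HU he hN Hpos Hadm) as [Hsp HM1].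
  destruct F as [|[a s] rest]. { destruct Hadm as [Fne _]. exfalso; apply Fne; auto. }
  simpl in Hfst. subst a.
  assert (MF U Rr eps ((a1, s) :: rest) (1 - dphi) < 1 - dphi).
  { apply (main_ineq U DU Rr dR eps a1 s rest (1 - dphi) HU he he1 Hd Hpos ltac:(lia) HdR Hsp HM1); lra. }
  lra.
Qed.
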